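(* For every $j\ge 0$ the limit $p_j^*=\lim_{n\to\infty}p_{j,n}$ exists; put $u_0^*=0$ and $u_j^*=1/p_{j-1}^*$ for $j\ge1$, and $$S_N=\sum_{j=0}^N\bigl(3-2p_j^*-p_j^*u_j^*\bigr).$$ Then the limits $S=\lim_{N\to\infty}S_N$ and $C=\lim_{n\to\infty}C_n$ exist, and $C=2S+1$.
   Context: For $n\ge1$ and $\mathbf{x}=(x_1,\dots,x_n)\in(0,\infty)^n$ let $f_n(\mathbf{x})=\sum_{i=1}^n x_i+\sum_{1\le i\le j\le n}\prod_{k=i}^j \frac1{x_k}$, $A_n=\inf_{\mathbf{x}\in(0,\infty)^n} f_n(\mathbf{x})$, and $C_n=3n-A_n$. Let $\Phi$ be the partial map of $\mathbb{R}^2$ defined for $p\ne0$ by $\Phi(p,u)=\bigl(p^2(u+1)-1,\ 1/p\bigr)$. For $n\ge1$, the trajectory $T_n$ is the (existing and unique) finite sequence $(p_{j,n},u_{j,n})$, $j=0,\dots,n$, with $(p_{j,n},u_{j,n})=\Phi(p_{j-1,n},u_{j-1,n})$ for $1\le j\le n$, $u_{0,n}=0$, $p_{n,n}=0$, and $p_{j,n}>0$ for $0\le j\le n-1$. *)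

(* Defs.v *)
From Stdlib Require Import Reals Lra ClassicalEpsilon.
From Coquelicot Require Import Coquelicot.
Open Scope R_scope.

Fixpoint sumR (n : nat) (g : nat -> R) : R :=
  match n with O => 0 | S m => sumR m g + g m end.

Fixpoint prodR (a len : nat) (g : nat -> R) : R :=
  match len with O => 1 | S m => g a * prodR (S a) m g end.

(* f_n(x), with x_1..x_n stored as x 0 .. x (n-1):
   sum_i x_i + sum_{i <= j} prod_{k=i}^{j} 1/x_k ; j = i + d. *)
Definition f_n (n : nat) (x : nat -> R) : R :=
  sumR n x + sumR n (fun i => sumR (n - i) (fun d => prodR i (S d) (fun k => / x k))).

(* A_n = inf over x in (0,oo)^n of f_n(x)  (finite since f_n >= 0) *)
Definition A_n (n : nat) : R :=
  real (Glb_Rbar (fun y => exists x : nat -> R,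
          (forall i, (i < n)%nat -> 0 < x i) /\ y = f_n n x)).

Definition C_n (n : nat) : R := 3 * INR n - A_n n.

(* The partial map Phi(p,u) = (p^2 (u+1) - 1, 1/p), used for p <> 0. *)
Definition Phi (pu : R * R) : R * R :=
  let (p, u) := pu in (p ^ 2 * (u + 1) - 1, / p).

Definition is_trajectory (n : nat) (pu : (nat -> R) * (nat -> R)) : Prop :=
  let (p, u) := pu in
  u 0%nat = 0 /\ p n = 0 /\
  (forall j, (j < n)%nat -> 0 < p j) /\
  (forall j, (1 <= j <= n)%nat -> (p j, u j) = Phi (p (j - 1)%nat, u (j - 1)%nat)).

Definition traj (n : nat) : (nat -> R) * (nat -> R) :=
  epsilon (inhabits ((fun _ => 0), (fun _ => 0))) (is_trajectory n).

Definition p_jn (j n : nat) : R := fst (traj n) j.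

(* Main.v *)
Require Import Defs.
From Stdlib Require Import Reals Lra Lia ClassicalEpsilon.
From Coquelicot Require Import Coquelicot.
Open Scope R_scope.

Fixpoint P (j : nat) (s : R) : R :=
  match j with
  | O => s
  | S j' => match j' with
            | O => s * s - 1
            | S j'' => (P j' s) ^ 2 * (/ P j'' s + 1) - 1
            end
  end.

Lemma P_SS j s : P (S (S j)) s = (P (S j) s) ^ 2 * (/ P j s + 1) - 1.
Proof. reflexivity. Qed.

Definition good (n : nat) (s : R) := forall k, (k < n)%nat -> 0 < P k s.

Lemma good_le n m s : (m <= n)%nat -> good n s -> good m s.
Proof. intros H G k Hk; apply G; lia. Qed.

Lemma mono_aux i : forall s s', s < s' -> good (S i) s ->
  P i s < P i s' /\ P (S i) s < P (S i) s' /\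
  P (S i) s / P i s < P (S i) s' / P i s'.
Proof.
  induction i as [|i IH]; intros s s' Hss G.
  - assert (H0 : 0 < s) by (apply (G 0%nat); lia).
    simpl. split; [lra|split; [apply Rplus_lt_compat_r; apply Rmult_le_0_lt_compat; lra|]].
    assert (E : forall t, 0 < t -> (t*t-1)/t = t - /t) by (intros; field; lra).
    rewrite !E by lra.
    assert (/ s' < / s) by (apply Rinv_lt_contravar; nra).
    lra.
  - destruct (IH s s' Hss (good_le (S (S i)) (S i) s ltac:(lia) G)) as [H1 [H2 H3]].
    assert (Pi : 0 < P i s) by (apply G; lia).
    assert (PSi : 0 < P (S i) s) by (apply G; lia).
    assert (Pi' : 0 < P i s') by lra.
    assert (PSi' : 0 < P (S i) s') by lra.
    split; [exact H2|].
    assert (E : forall a b, 0 < a -> 0 < b -> b ^ 2 * (/ a + 1) - 1 = b * (b / a) + b*b - 1)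
      by (intros; field; lra).
    assert (E2 : forall a b, 0 < a -> 0 < b -> (b ^ 2 * (/ a + 1) - 1) / b = b / a + b - / b)
      by (intros; field; lra).
    rewrite !P_SS.
    assert (0 < P (S i) s / P i s) by (apply Rdiv_lt_0_compat; lra).
    split.
    + rewrite !E by lra. nra.
    + rewrite !E2 by lra.
      assert (/ P (S i) s' < / P (S i) s) by (apply Rinv_lt_contravar; nra).
      lra.
Qed.

Lemma Pmono j s s' : good j s -> s < s' -> P j s < P j s'.
Proof.
  destruct j as [|i]; intros G H; [simpl; lra|].
  apply (mono_aux i s s' H G).
Qed.

Lemma Pmono_le j s s' : good j s -> s <= s' -> P j s <= P j s'.
Proof.
  intros G [H|H]; [left; now apply Pmono|subst; lra].
Qed.

Lemma ratio_mono i s s' : good (S i) s -> s < s' ->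
  P (S i) s / P i s < P (S i) s' / P i s'.
Proof. intros G H; apply (mono_aux i s s' H G). Qed.

Lemma good_mono n s s' : good n s -> s <= s' -> good n s'.
Proof.
  intros G H k Hk. apply Rlt_le_trans with (P k s). apply G; lia.
  apply Pmono_le; auto. apply good_le with n; [lia|auto].
Qed.

Lemma big_aux s : 2 <= s -> forall j, 2 <= P j s /\ 2 <= P (S j) s.
Proof.
  intros Hs j; induction j as [|j [H1 H2]].
  - simpl; split; nra.
  - split; auto. rewrite P_SS.
    assert (0 < / P j s) by (apply Rinv_0_lt_compat; lra). nra.
Qed.

Lemma big s j : 2 <= s -> 2 <= P j s.
Proof. intros H; apply (big_aux s H j). Qed.

Lemma P_cont : forall j x, (forall k, (S (S k) <= j)%nat -> P k x <> 0) ->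
  continuity_pt (P j) x.
Proof.
  assert (forall j x, (forall k, (S (S k) <= S j)%nat -> P k x <> 0) ->
    continuity_pt (P j) x /\ continuity_pt (P (S j)) x).
  { induction j as [|j IH]; intros x Hx.
    - split.
      + apply continuity_pt_ext with (fun s => s); [reflexivity|apply continuity_pt_id].
      + apply continuity_pt_ext with (fun s => s * s - 1); [reflexivity|].
        apply continuity_pt_minus.
        apply continuity_pt_mult; apply continuity_pt_id.
        apply continuity_pt_const; intros a b; reflexivity.
    - destruct (IH x) as [C1 C2]; [intros k Hk; apply Hx; lia|].
      split; auto.
      apply continuity_pt_ext with (fun s => (P (S j) s * (P (S j) s * 1)) * (/ P j s + 1) - 1).
      { intros s; rewrite P_SS; reflexivity. }
      apply continuity_pt_minus; [|apply continuity_pt_const; intros a b; reflexivity].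
      apply continuity_pt_mult.
      + apply continuity_pt_mult; auto. apply continuity_pt_mult; auto.
        apply continuity_pt_const; intros a b; reflexivity.
      + apply continuity_pt_plus; [|apply continuity_pt_const; intros a b; reflexivity].
        apply continuity_pt_inv; auto; apply Hx; lia. }
  intros j x Hx. destruct j as [|j]; [apply continuity_pt_ext with (fun s => s); [reflexivity|apply continuity_pt_id]|].
  apply (H j x); intros k Hk; apply Hx; lia.
Qed.
Lemma P_at_zero_next n s : good n s -> P n s = 0 -> P (S n) s = -1.
Proof.
  intros G H. destruct n as [|n].
  - simpl in *. subst. ring.
  - rewrite P_SS, H. ring.
Qed.

Lemma exists_sigma n : exists s, good n s /\ P n s = 0 /\ s < 2.
Proof.
  induction n as [|n [s [G [Z L]]]].
  - exists 0. split; [intros k Hk; lia|]. simpl; split; lra.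
  - assert (Hm1 : P (S n) s = -1) by (apply P_at_zero_next; auto).
    assert (H2 : 2 <= P (S n) 2) by (apply big; lra).
    destruct (Ranalysis5.IVT_interv (P (S n)) s 2) as [z [[Hz1 Hz2] Hz]].
    + intros a Ha. apply P_cont. intros k Hk.
      assert (0 < P k a); [|lra].
      apply Rlt_le_trans with (P k s). apply G; lia.
      apply Pmono_le; [apply good_le with n; [lia|auto]|lra].
    + lra.
    + lra.
    + lra.
    + assert (Hzs : s < z) by (destruct Hz1 as [Hz1|Hz1]; [auto|subst; lra]).
      exists z. split; [|split; [auto|]].
      * intros k Hk. destruct (Nat.eq_dec k n) as [->|Hkn].
        -- rewrite <- Z. apply Pmono; auto.
        -- apply Rlt_trans with (P k s). apply G; lia.
           apply Pmono; auto. apply good_le with n; [lia|auto].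
      * destruct Hz2 as [Hz2|Hz2]; auto. subst. lra.
Qed.

Definition trajP (s : R) : (nat -> R) * (nat -> R) :=
  (fun j => P j s, fun j => match j with O => 0 | S k => / P k s end).

Lemma trajP_ok n s : good n s -> P n s = 0 -> is_trajectory n (trajP s).
Proof.
  intros G Z. unfold trajP, is_trajectory.
  split; [reflexivity|split; [auto|split; [auto|]]].
  intros j Hj. destruct j as [|j]; [lia|].
  replace (S j - 1)%nat with j by lia.
  unfold Phi. f_equal.
  destruct j as [|j]; simpl; ring.
Qed.

Lemma traj_spec n : is_trajectory n (traj n).
Proof.
  unfold traj. apply epsilon_spec.
  destruct (exists_sigma n) as [s [G [Z _]]].
  exists (trajP s). now apply trajP_ok.
Qed.

Lemma traj_shape n p u : is_trajectory n (p, u) ->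
  (forall j, (j <= n)%nat -> p j = P j (p 0%nat)) /\
  (forall j, (S j <= n)%nat -> u (S j) = / p j).
Proof.
  intros [U0 [Pn [Ppos Rec]]].
  assert (HU : forall j, (S j <= n)%nat -> u (S j) = / p j).
  { intros j Hj. specialize (Rec (S j) ltac:(lia)).
    replace (S j - 1)%nat with j in Rec by lia. unfold Phi in Rec.
    injection Rec; auto. }
  split; auto.
  assert (forall j, (S j <= n)%nat -> p j = P j (p 0%nat) /\ p (S j) = P (S j) (p 0%nat)).
  { induction j as [|j IH]; intros Hj.
    - split; [reflexivity|].
      specialize (Rec 1%nat ltac:(lia)). simpl in Rec. unfold Phi in Rec.
      injection Rec; intros _ E. rewrite E, U0. simpl. ring.
    - destruct IH as [IH1 IH2]; [lia|]. split; auto.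
      specialize (Rec (S (S j)) ltac:(lia)).
      replace (S (S j) - 1)%nat with (S j) in Rec by lia. unfold Phi in Rec.
      injection Rec; intros _ E. rewrite E, P_SS, HU by lia.
      rewrite IH1, IH2. reflexivity. }
  intros j Hj. destruct n as [|n].
  - assert (j = 0%nat) by lia. subst; reflexivity.
  - destruct (Nat.eq_dec j (S n)) as [->|Hne].
    + apply (H n); lia.
    + apply (H j); lia.
Qed.

Lemma uniq_param n a b : good n a -> P n a = 0 -> good n b -> P n b = 0 -> a = b.
Proof.
  intros Ga Za Gb Zb.
  destruct (Rtotal_order a b) as [H|[H|H]]; auto.
  - apply Pmono with (j := n) in H; auto. lra.
  - apply Pmono with (j := n) in H; auto. lra.
Qed.

Definition tau (n : nat) : R := fst (traj n) 0%nat.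

Lemma tau_spec n : good n (tau n) /\ P n (tau n) = 0 /\
  (forall j, (j <= n)%nat -> p_jn j n = P j (tau n)) /\
  (forall j, (S j <= n)%nat -> snd (traj n) (S j) = / P j (tau n)) /\
  snd (traj n) 0%nat = 0.
Proof.
  pose proof (traj_spec n) as T. unfold p_jn, tau.
  destruct (traj n) as [p u]. simpl.
  destruct (traj_shape n p u T) as [H1 H2].
  destruct T as [U0 [Pn [Ppos Rec]]].
  split; [|split; [|split; [|split]]].
  - intros k Hk. rewrite <- H1 by lia. auto.
  - rewrite <- H1 by lia. auto.
  - auto.
  - intros j Hj. rewrite H2 by lia. rewrite H1 by lia. reflexivity.
  - auto.
Qed.

Lemma tau_lt2 n : tau n < 2.
Proof.
  destruct (tau_spec n) as [_ [Z _]].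
  destruct (Rlt_or_le (tau n) 2) as [H|H]; auto.
  pose proof (big _ n H). lra.
Qed.

Lemma tau_incr n : tau n < tau (S n).
Proof.
  destruct (tau_spec n) as [G [Z _]].
  destruct (tau_spec (S n)) as [G' [Z' _]].
  assert (Hp : 0 < P n (tau (S n))) by (apply G'; lia).
  destruct (Rtotal_order (tau n) (tau (S n))) as [H|[H|H]]; auto.
  - rewrite <- H in Hp. lra.
  - apply Pmono with (j := n) in H; [lra|]. apply good_le with (S n); [lia|auto].
Qed.
Lemma div_gt1 c d : 0 < d -> 1 < c / d -> d < c.
Proof. intros H1 H2. apply Rmult_lt_compat_r with (r := d) in H2; auto.
  unfold Rdiv in H2. rewrite Rmult_assoc, Rinv_l, Rmult_1_r, Rmult_1_l in H2 by lra. lra. Qed.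
Lemma div_ge1 c d : 0 < d -> 1 <= c / d -> d <= c.
Proof. intros H1 H2. apply Rmult_le_compat_r with (r := d) in H2; [|lra].
  unfold Rdiv in H2. rewrite Rmult_assoc, Rinv_l, Rmult_1_r, Rmult_1_l in H2 by lra. lra. Qed.
Lemma ge1_div c d : 0 < d -> d <= c -> 1 <= c / d.
Proof. intros H1 H2. apply Rmult_le_reg_r with d; auto. unfold Rdiv.
  rewrite Rmult_assoc, Rinv_l by lra. lra. Qed.

Lemma rat_rec k a : P k a <> 0 -> P (S k) a <> 0 ->
  P (S (S k)) a / P (S k) a = P (S k) a / P k a + P (S k) a - / P (S k) a.
Proof. intros H1 H2. rewrite P_SS. field. auto. Qed.

Lemma sym_param m a : good (S m) a -> P (S m) a = 0 ->
  forall j, (j <= m)%nat -> P j a * P (m - j) a = 1.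
Proof.
  intros G Z.
  set (b := / P m a).
  assert (Hq : forall i, (i <= m)%nat -> 0 < P i a) by (intros i Hi; apply G; lia).
  assert (Hpair : forall j, (S j <= m)%nat ->
     P j b = / P (m - j) a /\ P (S j) b = / P (m - S j) a).
  { induction j as [|j IH]; intros Hj.
    - destruct m as [|m]; [lia|].
      rewrite Nat.sub_0_r. split; [reflexivity|].
      replace (S m - 1)%nat with m by lia.
      rewrite P_SS in Z. simpl P at 1. unfold b.
      assert (0 < P m a) by (apply Hq; lia).
      assert (0 < P (S m) a) by (apply Hq; lia).
      assert (E : / P m a = (/ P (S m) a) ^ 2 - 1).
      { transitivity ((P (S m) a ^ 2 * (/ P m a + 1)) * (/ P (S m) a) ^ 2 - 1).
        - field. lra.
        - replace (P (S m) a ^ 2 * (/ P m a + 1)) with 1 by lra. ring. }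
      rewrite E. ring.
    - destruct IH as [IH1 IH2]; [lia|]. split; auto.
      rewrite P_SS, IH1, IH2.
      set (k := (m - S (S j))%nat).
      replace (m - S j)%nat with (S k) by (unfold k; lia).
      replace (m - j)%nat with (S (S k)) by (unfold k; lia).
      assert (0 < P k a) by (apply Hq; unfold k; lia).
      assert (0 < P (S k) a) by (apply Hq; unfold k; lia).
      rewrite P_SS. rewrite Rinv_inv. field. split; lra. }
  assert (Hall : forall j, (j <= m)%nat -> P j b = / P (m - j) a).
  { intros j Hj. destruct (Nat.eq_dec j m) as [->|Hne].
    - destruct m as [|m]; [simpl; unfold b; f_equal|].
      apply (Hpair m); lia.
    - apply (Hpair j); lia. }
  assert (Gb : good (S m) b).
  { intros k Hk. rewrite Hall by lia. apply Rinv_0_lt_compat, Hq; lia. }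
  assert (Zb : P (S m) b = 0).
  { assert (0 < P 0 a) by (apply Hq; lia).
    destruct m as [|m].
    - simpl in Z |- *. unfold b; simpl.
      assert (Ea : a * a = 1) by lra.
      rewrite <- Rinv_mult, Ea, Rinv_1. ring.
    - rewrite P_SS, (Hall (S m)), (Hall m) by lia.
      replace (S m - S m)%nat with 0%nat by lia.
      replace (S m - m)%nat with 1%nat by lia.
      simpl P in *. rewrite Rinv_inv. field. lra. }
  assert (Eab : a = b) by (apply (uniq_param (S m)); auto).
  intros j Hj. rewrite Eab at 1. rewrite Hall by auto.
  field. assert (0 < P (m - j) a) by (apply Hq; lia). lra.
Qed.

Lemma decr_param n a : good n a -> P n a = 0 ->
  forall k, (S k <= n)%nat -> P (S k) a < P k a.
Proof.
  intros G Z k Hk.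
  assert (Hq : forall i, (S i <= n)%nat -> 0 < P i a) by (intros i Hi; apply G; lia).
  destruct (Rlt_or_le (P (S k) a) (P k a)) as [H|H]; auto. exfalso.
  destruct (Rlt_or_le (P (S k) a) 1) as [H1|H1].
  - assert (B : forall i, (i <= k)%nat -> P (k - i) a <= P (S (k - i)) a /\ P (S (k - i)) a < 1).
    { induction i as [|i IH]; intros Hi.
      - rewrite Nat.sub_0_r. auto.
      - destruct IH as [IH1 IH2]; [lia|].
        set (j := (k - S i)%nat) in *.
        replace (k - i)%nat with (S j) in * by (unfold j; lia).
        assert (0 < P j a) by (apply Hq; unfold j; lia).
        assert (0 < P (S j) a) by (apply Hq; unfold j; lia).
        assert (0 < P (S (S j)) a) by lra.
        split; [|lra].
        pose proof (rat_rec j a ltac:(lra) ltac:(lra)) as R.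
        assert (1 <= P (S (S j)) a / P (S j) a).
        { apply ge1_div; lra. }
        assert (P (S j) a - / P (S j) a < 0).
        { assert (1 < / P (S j) a). { rewrite <- Rinv_1. apply Rinv_lt_contravar; lra. } lra. }
        assert (1 < P (S j) a / P j a) by lra.
        apply div_gt1 in H6; lra. }
    destruct (B k ltac:(lia)) as [B1 B2]. rewrite Nat.sub_diag in B1, B2.
    assert (H0 : 0 < P 0 a) by (apply Hq; lia). simpl in H0, B1, B2. nra.
  - assert (F : forall i, (S (k + i) <= n)%nat -> P (k + i) a <= P (S (k + i)) a /\ 1 <= P (S (k + i)) a).
    { induction i as [|i IH]; intros Hi.
      - rewrite Nat.add_0_r. auto.
      - destruct IH as [IH1 IH2]; [lia|].
        replace (k + S i)%nat with (S (k + i)) by lia.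
        set (j := (k + i)%nat) in *.
        assert (0 < P j a) by (apply Hq; unfold j; lia).
        assert (0 < P (S j) a) by (apply Hq; unfold j; lia).
        pose proof (rat_rec j a ltac:(lra) ltac:(lra)) as R.
        assert (1 <= P (S j) a / P j a).
        { apply ge1_div; lra. }
        assert (0 <= P (S j) a - / P (S j) a).
        { assert (/ P (S j) a <= 1). { rewrite <- Rinv_1. apply Rinv_le_contravar; lra. } lra. }
        assert (1 <= P (S (S j)) a / P (S j) a) by lra.
        assert (P (S j) a <= P (S (S j)) a).
        { apply div_ge1; lra. }
        lra. }
    destruct (F (n - S k)%nat ltac:(lia)) as [_ F2].
    replace (S (k + (n - S k))) with n in F2 by lia. lra.
Qed.
Lemma sumR_S n g : sumR (S n) g = sumR n g + g n.
Proof. reflexivity. Qed.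

Lemma sumR_ext n g h : (forall i, (i < n)%nat -> g i = h i) -> sumR n g = sumR n h.
Proof.
  induction n as [|n IH]; intros H; simpl; auto.
  rewrite IH by (intros; apply H; lia). rewrite H by lia. reflexivity.
Qed.

Lemma sumR_plus n g h : sumR n (fun i => g i + h i) = sumR n g + sumR n h.
Proof. induction n as [|n IH]; simpl; [ring|rewrite IH; ring]. Qed.

Lemma sumR_minus n g h : sumR n (fun i => g i - h i) = sumR n g - sumR n h.
Proof. induction n as [|n IH]; simpl; [ring|rewrite IH; ring]. Qed.

Lemma sumR_const n c : sumR n (fun _ => c) = INR n * c.
Proof. induction n as [|n IH]; simpl sumR; [simpl; ring|rewrite IH, S_INR; ring]. Qed.

Lemma prodR_last m : forall a g, prodR a (S m) g = prodR a m g * g (a + m)%nat.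
Proof.
  induction m as [|m IH]; intros a g.
  - simpl. rewrite Nat.add_0_r. ring.
  - change (prodR a (S (S m)) g) with (g a * prodR (S a) (S m) g).
    rewrite IH. simpl. replace (S (a + m)) with (a + S m)%nat by lia. ring.
Qed.

Definition Qx (m : nat) (x : nat -> R) : R :=
  sumR m (fun i => prodR i (m - i) (fun k => / x k)).

Lemma Qx_0 x : Qx 0 x = 0.
Proof. reflexivity. Qed.

Lemma Qx_S m x : Qx (S m) x = / x m * (1 + Qx m x).
Proof.
  unfold Qx. rewrite sumR_S.
  rewrite (sumR_ext m _ (fun i => prodR i (m - i) (fun k => / x k) * / x m)).
  2:{ intros i Hi. replace (S m - i)%nat with (S (m - i)) by lia.
      rewrite prodR_last. replace (i + (m - i))%nat with m by lia. reflexivity. }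
  replace (S m - m)%nat with 1%nat by lia. simpl.
  assert (forall n (g : nat -> R) c, sumR n (fun i => g i * c) = sumR n g * c).
  { induction n as [|n IH]; intros; simpl; [ring|rewrite IH; ring]. }
  rewrite H. ring.
Qed.

Lemma f_n_eq n x : f_n n x = sumR n (fun j => x j + Qx (S j) x).
Proof.
  unfold f_n. rewrite sumR_plus. f_equal.
  induction n as [|n IH]; [reflexivity|].
  rewrite sumR_S.
  rewrite (sumR_ext n _ (fun i => sumR (n - i) (fun d => prodR i (S d) (fun k => / x k))
                               + prodR i (S (n - i)) (fun k => / x k))).
  2:{ intros i Hi. replace (S n - i)%nat with (S (n - i)) by lia. reflexivity. }
  rewrite sumR_plus, IH.
  replace (S n - n)%nat with 1%nat by lia.
  rewrite (sumR_S n (fun i => Qx (S i) x)), Rplus_assoc. f_equal. unfold Qx.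
  rewrite (sumR_S n (fun i => prodR i (S n - i) (fun k => / x k))).
  replace (S n - n)%nat with 1%nat by lia.
  rewrite (sumR_ext n (fun i => prodR i (S n - i) (fun k => / x k))
                      (fun i => prodR i (S (n - i)) (fun k => / x k))).
  2:{ intros i Hi. replace (S n - i)%nat with (S (n - i)) by lia. reflexivity. }
  simpl sumR. simpl prodR. ring.
Qed.

Lemma tangent z z' : 0 < z -> 0 < z' -> z' * (1 + (ln z - ln z')) <= z.
Proof.
  intros H H'.
  pose proof (exp_ineq1_le (ln (z / z'))) as E.
  rewrite exp_ln in E by (apply Rdiv_lt_0_compat; auto).
  rewrite ln_div in E by auto.
  apply Rmult_le_compat_l with (r := z') in E; [|lra].
  replace (z' * (z / z')) with z in E by (field; lra). exact E.
Qed.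

Definition uu (a : R) (j : nat) : R := match j with O => 0 | S k => / P k a end.

Definition Gval (n : nat) (a : R) : R :=
  sumR n (fun j => P j a + uu a j * P j a + uu a (S j)).

Lemma uu_id a m : (forall k, S k = m -> P k a <> 0) -> P m a <> 0 ->
  uu a (S m) * P (S m) a = P m a + P m a * uu a m - uu a (S m).
Proof.
  intros H1 H2. destruct m as [|k].
  - simpl in *. rewrite Rmult_0_r. field. auto.
  - rewrite P_SS. unfold uu. field. split; auto.
Qed.
Lemma Qx_pos x n : (forall i, (i < n)%nat -> 0 < x i) -> forall j, (j <= n)%nat -> 0 <= Qx j x /\ ((1 <= j)%nat -> 0 < Qx j x).
Proof.
  intros Hx j. induction j as [|j IH]; intros Hj.
  - rewrite Qx_0. split; [lra|intros; lia].
  - destruct IH as [IH _]; [lia|]. rewrite Qx_S.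
    assert (0 < / x j) by (apply Rinv_0_lt_compat, Hx; lia).
    split; intros; nra.
Qed.

Lemma lower_bound n a : good n a -> P n a = 0 ->
  forall x, (forall i, (i < n)%nat -> 0 < x i) -> Gval n a <= f_n n x.
Proof.
  intros G Z x Hx. rewrite f_n_eq. unfold Gval.
  set (L := fun j => ln (Qx j x) - ln (uu a j)).
  assert (Hq : forall i, (i < n)%nat -> 0 < P i a) by auto.
  assert (Step : forall m, (m <= n)%nat ->
     - (uu a m * P m a * L m) <=
     sumR m (fun j => x j + Qx (S j) x) - sumR m (fun j => P j a + uu a j * P j a + uu a (S j))).
  { induction m as [|m IH]; intros Hm.
    - simpl. lra.
    - specialize (IH ltac:(lia)). rewrite !sumR_S.
      assert (Pm : 0 < P m a) by (apply Hq; lia).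
      destruct (Qx_pos x n Hx (S m) Hm) as [_ QS]. specialize (QS ltac:(lia)).
      destruct (Qx_pos x n Hx m ltac:(lia)) as [Qm0 Qm].
      set (Y := Qx (S m) x) in *. set (Qm' := Qx m x) in *.
      assert (xm : 0 < x m) by (apply Hx; lia).
      assert (Ex : x m = / Y + Qm' / Y).
      { unfold Y. rewrite Qx_S. fold Qm'. field. split; [lra|].
        assert (0 < 1 + Qm') by lra. lra. }
      assert (Ustar : uu a (S m) = / P m a) by reflexivity.
      assert (Upos : 0 < uu a (S m)) by (rewrite Ustar; apply Rinv_0_lt_compat; auto).
      pose proof (tangent Y (uu a (S m)) QS Upos) as T1.
      pose proof (tangent (/ Y) (P m a) (Rinv_0_lt_compat _ QS) Pm) as T2.
      rewrite ln_Rinv in T2 by auto.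
      assert (Eln : ln (P m a) = - ln (uu a (S m))).
      { rewrite Ustar, ln_Rinv by auto. ring. }
      rewrite Eln in T2.
      assert (T3 : uu a m * P m a * (1 + (L m - L (S m))) <= Qm' / Y).
      { destruct m as [|k].
        - simpl uu. unfold Qm'. rewrite Qx_0. unfold Rdiv. rewrite Rmult_0_l. lra.
        - assert (Qk : 0 < Qm') by (apply Qm; lia).
          assert (Uk : 0 < uu a (S k)) by (simpl; apply Rinv_0_lt_compat, Hq; lia).
          pose proof (tangent (Qm' / Y) (uu a (S k) * P (S k) a)
                        (Rdiv_lt_0_compat _ _ Qk QS) ltac:(apply Rmult_lt_0_compat; auto)) as T.
          rewrite ln_div in T by auto. rewrite ln_mult in T by auto.
          rewrite Eln in T. unfold L. fold Qm' Y. lra. }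
      pose proof (uu_id a m) as UI.
      assert (UI' : uu a (S m) * P (S m) a = P m a + P m a * uu a m - uu a (S m)).
      { apply UI; [|lra]. intros k Hk. assert (0 < P k a) by (apply Hq; lia). lra. }
      unfold L in *. fold Y in T1, T3 |- *. fold Qm' in T3 |- *.
      set (l1 := ln Y - ln (uu a (S m))) in *.
      set (l0 := ln Qm' - ln (uu a m)) in *.
      set (c0 := uu a m * P m a) in *.
      assert (E1 : uu a (S m) * P (S m) a * l1 = (P m a + P m a * uu a m - uu a (S m)) * l1)
        by (rewrite UI'; reflexivity).
      replace (P m a * uu a m) with c0 in E1 by (unfold c0; ring).
      replace (uu a m * P m a) with c0 by reflexivity.
      rewrite Ex.
      assert (T2' : P m a * (1 + (- ln Y - - ln (uu a (S m)))) <= / Y) by exact T2.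
      replace (- ln Y - - ln (uu a (S m))) with (- l1) in T2' by (unfold l1; ring).
      assert (T3' : c0 + c0 * l0 - c0 * l1 <= Qm' / Y) by (eapply Rle_trans; [|exact T3]; right; ring).
      fold Qm' in IH. fold l0 in IH. rewrite E1. lra. }
  specialize (Step n ltac:(lia)). rewrite Z in Step. lra.
Qed.

Lemma attained n a : good n a -> P n a = 0 ->
  exists x, (forall i, (i < n)%nat -> 0 < x i) /\ f_n n x = Gval n a.
Proof.
  intros G Z.
  set (x := fun j => (1 + uu a j) * P j a).
  assert (Uge : forall j, (j <= n)%nat -> 0 <= uu a j).
  { intros [|j] Hj; simpl; [lra|]. left; apply Rinv_0_lt_compat, G; lia. }
  assert (Hx : forall i, (i < n)%nat -> 0 < x i).
  { intros i Hi. unfold x. apply Rmult_lt_0_compat; [|apply G; lia].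
    specialize (Uge i ltac:(lia)). lra. }
  exists x. split; auto.
  assert (HQ : forall j, (j <= n)%nat -> Qx j x = uu a j).
  { induction j as [|j IH]; intros Hj; [reflexivity|].
    rewrite Qx_S, IH by lia. unfold x. simpl uu at 3.
    specialize (Uge j ltac:(lia)). assert (0 < P j a) by (apply G; lia).
    field. split; lra. }
  rewrite f_n_eq. unfold Gval. apply sumR_ext. intros i Hi.
  rewrite HQ by lia. unfold x. ring.
Qed.

Lemma A_n_eq n : A_n n = Gval n (tau n).
Proof.
  destruct (tau_spec n) as [G [Z _]].
  unfold A_n. rewrite (is_glb_Rbar_unique _ (Finite (Gval n (tau n)))); [reflexivity|].
  split.
  - intros y [x [Hx ->]]. simpl. apply lower_bound; auto.
  - intros b Hb. destruct (attained n (tau n) G Z) as [x [Hx E]].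
    apply Hb. exists x. split; auto.
Qed.
Lemma sumR_split m k g : sumR (m + k) g = sumR m g + sumR k (fun i => g (m + i)%nat).
Proof.
  induction k as [|k IH]; simpl; [rewrite Nat.add_0_r; ring|].
  rewrite Nat.add_succ_r. simpl. rewrite IH. ring.
Qed.

Lemma sumR_shift n g : sumR (S n) g = g 0%nat + sumR n (fun i => g (S i)).
Proof.
  induction n as [|n IH]; [simpl; ring|].
  rewrite sumR_S, IH, sumR_S. ring.
Qed.

Lemma sumR_rev k h : sumR k h = sumR k (fun i => h (k - 1 - i)%nat).
Proof.
  induction k as [|k IH]; [reflexivity|].
  rewrite sumR_S, sumR_shift, IH. replace (S k - 1 - 0)%nat with k by lia.
  rewrite Rplus_comm. f_equal. apply sumR_ext. intros i Hi. f_equal. lia.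
Qed.

Lemma sumR_palin L g : (forall i, (i < L)%nat -> g i = g (L - 1 - i)%nat) ->
  sumR L g = sumR (L / 2) g + sumR (L - L / 2) g.
Proof.
  intros H.
  assert (Hm : (L / 2 <= L)%nat) by (apply Nat.Div0.div_le_upper_bound; lia).
  replace L with (L / 2 + (L - L / 2))%nat at 1 by lia.
  rewrite sumR_split. f_equal.
  rewrite sumR_rev. apply sumR_ext. intros i Hi.
  rewrite H by lia. f_equal. lia.
Qed.

Lemma sumR_tele K k f : sumR k (fun i => f (K + i)%nat - f (K + S i)%nat) = f K - f (K + k)%nat.
Proof.
  induction k as [|k IH]; [simpl; rewrite Nat.add_0_r; ring|].
  rewrite sumR_S, IH. ring.
Qed.

Lemma sumR_le n g h : (forall i, (i < n)%nat -> g i <= h i) -> sumR n g <= sumR n h.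
Proof.
  induction n as [|n IH]; intros H; simpl; [lra|].
  apply Rplus_le_compat; [apply IH; intros; apply H; lia|apply H; lia].
Qed.

Lemma sumR_nonneg n g : (forall i, (i < n)%nat -> 0 <= g i) -> 0 <= sumR n g.
Proof.
  intros H. replace 0 with (sumR n (fun _ => 0)).
  apply sumR_le; auto. rewrite sumR_const; ring.
Qed.

Lemma sumR_lim K (x : nat -> nat -> R) (xs : nat -> R) :
  (forall k, is_lim_seq (fun n => x n k) (xs k)) ->
  is_lim_seq (fun n => sumR K (x n)) (sumR K xs).
Proof.
  intros H. induction K as [|K IH].
  - simpl. apply is_lim_seq_const.
  - simpl. apply (is_lim_seq_plus' _ _ _ _ IH (H K)).
Qed.

Lemma sandwich (x : nat -> nat -> R) (xs : nat -> R) (X : R) (M : nat -> nat) (e : nat -> R) :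
  (forall k, is_lim_seq (fun n => x n k) (xs k)) ->
  is_lim_seq (fun N => sumR N xs) X ->
  is_lim_seq e 0 ->
  (forall K, exists N, forall n, (N <= n)%nat -> (K <= M n)%nat) ->
  (forall n K, (K <= M n)%nat -> Rabs (sumR (M n) (x n) - sumR K (x n)) <= e K) ->
  is_lim_seq (fun n => sumR (M n) (x n)) X.
Proof.
  intros Hx HX He HM Ht.
  apply is_lim_seq_spec. intros eps.
  assert (E3 : 0 < eps / 3) by (destruct eps; simpl; lra).
  apply is_lim_seq_spec in He. destruct (He (mkposreal _ E3)) as [K1 HK1].
  apply is_lim_seq_spec in HX. destruct (HX (mkposreal _ E3)) as [K2 HK2].
  set (K := Nat.max K1 K2).
  pose proof (sumR_lim K x xs Hx) as HS.
  apply is_lim_seq_spec in HS. destruct (HS (mkposreal _ E3)) as [N1 HN1].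
  destruct (HM K) as [N2 HN2].
  exists (Nat.max N1 N2). intros n Hn.
  specialize (HK1 K ltac:(unfold K; lia)). specialize (HK2 K ltac:(unfold K; lia)).
  specialize (HN1 n ltac:(lia)). specialize (HN2 n ltac:(lia)).
  specialize (Ht n K HN2). simpl in *.
  rewrite Rminus_0_r in HK1.
  assert (e K < eps / 3) by (apply Rle_lt_trans with (Rabs (e K)); [apply Rle_abs|auto]).
  apply Rabs_def2 in HK2. apply Rabs_def2 in HN1. apply Rabs_le_between in Ht.
  apply Rabs_def1; lra.
Qed.
Lemma decr_le n a : good n a -> P n a = 0 ->
  forall j d, (j + d <= n)%nat -> P (j + d) a <= P j a.
Proof.
  intros G Z j d. induction d as [|d IH]; intros Hd.
  - rewrite Nat.add_0_r. lra.
  - replace (j + S d)%nat with (S (j + d)) by lia.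
    pose proof (decr_param n a G Z (j + d) ltac:(lia)). specialize (IH ltac:(lia)). lra.
Qed.

Lemma first_half n a j : good n a -> P n a = 0 -> (2 * j + 1 <= n)%nat -> 1 <= P j a.
Proof.
  intros G Z Hj. destruct n as [|m]; [lia|].
  pose proof (sym_param m a G Z j ltac:(lia)) as Sy.
  pose proof (decr_le (S m) a G Z j (m - j - j) ltac:(lia)) as D.
  replace (j + (m - j - j))%nat with (m - j)%nat in D by lia.
  assert (0 < P j a) by (apply G; lia).
  nra.
Qed.

Definition ts : R := Lim_seq tau.

Lemma tau_lim : is_lim_seq tau ts.
Proof.
  apply Lim_seq_correct'. apply ex_finite_lim_seq_incr with 2.
  - intros n; left; apply tau_incr.
  - intros n; left; apply tau_lt2.
Qed.

Lemma tau_le_ts n : tau n <= ts.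
Proof.
  apply is_lim_seq_incr_compare; [apply tau_lim|]. intros; left; apply tau_incr.
Qed.

Lemma good_ts k : 0 < P k ts.
Proof.
  destruct (tau_spec (S k)) as [G _].
  apply Rlt_le_trans with (P k (tau (S k))). apply G; lia.
  apply Pmono_le; [apply good_le with (S k); [lia|auto]|apply tau_le_ts].
Qed.

Definition ps (j : nat) : R := P j ts.

Lemma Pn_lim j : is_lim_seq (fun n => P j (tau n)) (ps j).
Proof.
  apply is_lim_seq_continuous; [|apply tau_lim].
  apply P_cont. intros k _. pose proof (good_ts k). lra.
Qed.

Lemma P_le_ps n j : (j <= n)%nat -> P j (tau n) <= ps j.
Proof.
  intros H. destruct (tau_spec n) as [G _]. apply Pmono_le.
  - apply good_le with n; auto.
  - apply tau_le_ts.
Qed.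

Lemma ps_ge1 j : 1 <= ps j.
Proof.
  destruct (tau_spec (2 * j + 1)) as [G [Z _]].
  apply Rle_trans with (P j (tau (2 * j + 1))).
  - apply first_half with (2 * j + 1)%nat; auto.
  - apply P_le_ps; lia.
Qed.

Lemma ps_decr j : ps (S j) <= ps j.
Proof.
  assert (H : Rbar_le (ps (S j)) (ps j)).
  { apply is_lim_seq_le_loc with (fun n => P (S j) (tau n)) (fun n => P j (tau n)).
    - exists (S j). intros n Hn. destruct (tau_spec n) as [G [Z _]].
      left. apply decr_param with n; auto.
    - apply Pn_lim.
    - apply Pn_lim. }
  exact H.
Qed.

Definition rs (N : nat) : R := uu ts N * ps N.

Lemma rs_tele N : rs N = sumR N (fun j => ps j - / ps j).
Proof.
  induction N as [|N IH]; [unfold rs; simpl; ring|].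
  rewrite sumR_S, <- IH. unfold rs, ps.
  rewrite uu_id.
  - simpl uu at 2. ring.
  - intros k _. pose proof (good_ts k). lra.
  - pose proof (good_ts N). lra.
Qed.

Lemma rs_le1 N : rs N <= 1.
Proof.
  destruct N as [|N]; [unfold rs; simpl; lra|].
  unfold rs. simpl uu. fold (ps N).
  pose proof (ps_decr N). pose proof (ps_ge1 N).
  apply Rmult_le_reg_l with (ps N); [lra|].
  rewrite <- Rmult_assoc, Rinv_r, Rmult_1_l, Rmult_1_r by lra. lra.
Qed.

Lemma one_minus_le_ln r : 0 < r -> 1 - r <= - ln r.
Proof.
  intros H. pose proof (exp_ineq1_le (ln r)). rewrite exp_ln in H0 by auto. lra.
Qed.

Definition dd (j : nat) : R := ps j - / ps j.
Definition bs (j : nat) : R := ps j + / ps j - 2.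
Definition as_ (i : nat) : R := 1 - uu ts (S i) * ps (S i).

Lemma dd_nonneg j : 0 <= dd j.
Proof.
  unfold dd. pose proof (ps_ge1 j).
  assert (/ ps j <= 1) by (rewrite <- Rinv_1; apply Rinv_le_contravar; lra). lra.
Qed.

Lemma bs_bounds j : 0 <= bs j <= dd j.
Proof.
  unfold bs, dd. pose proof (ps_ge1 j).
  assert (/ ps j <= 1) by (rewrite <- Rinv_1; apply Rinv_le_contravar; lra).
  split; [|lra].
  assert (E : ps j + / ps j - 2 = (ps j - 1) ^ 2 / ps j) by (field; lra).
  rewrite E. apply Rmult_le_pos; [nra|left; apply Rinv_0_lt_compat; lra].
Qed.

Lemma as_bounds i : 0 <= as_ i <= ln (ps i) - ln (ps (S i)).
Proof.
  unfold as_. simpl uu. fold (ps i).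
  pose proof (ps_decr i). pose proof (ps_ge1 i). pose proof (ps_ge1 (S i)).
  split.
  - assert (/ ps i * ps (S i) <= 1); [|lra].
    apply Rmult_le_reg_l with (ps i); [lra|].
    rewrite <- Rmult_assoc, Rinv_r, Rmult_1_l, Rmult_1_r by lra. lra.
  - pose proof (one_minus_le_ln (/ ps i * ps (S i))
       ltac:(apply Rmult_lt_0_compat; [apply Rinv_0_lt_compat|]; lra)).
    rewrite ln_mult, ln_Rinv in H2 by (try apply Rinv_0_lt_compat; lra). lra.
Qed.

Lemma partial_incr (g : nat -> R) : (forall j, 0 <= g j) ->
  forall n, sumR n g <= sumR (S n) g.
Proof. intros H n. rewrite sumR_S. pose proof (H n). lra. Qed.

Definition Dl : R := Lim_seq (fun N => sumR N dd).
Definition Bl : R := Lim_seq (fun N => sumR N bs).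
Definition Al : R := Lim_seq (fun N => sumR N as_).

Lemma dd_lim : is_lim_seq (fun N => sumR N dd) Dl.
Proof.
  apply Lim_seq_correct'. apply ex_finite_lim_seq_incr with 1.
  - apply partial_incr, dd_nonneg.
  - intros n. rewrite <- rs_tele. apply rs_le1.
Qed.

Lemma bs_lim : is_lim_seq (fun N => sumR N bs) Bl.
Proof.
  apply Lim_seq_correct'. apply ex_finite_lim_seq_incr with 1.
  - apply partial_incr. intros j; apply bs_bounds.
  - intros n. apply Rle_trans with (sumR n dd).
    + apply sumR_le. intros; apply bs_bounds.
    + unfold dd. rewrite <- rs_tele. apply rs_le1.
Qed.

Lemma as_lim : is_lim_seq (fun N => sumR N as_) Al.
Proof.
  apply Lim_seq_correct'. apply ex_finite_lim_seq_incr with (ln (ps 0)).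
  - apply partial_incr. intros j; apply as_bounds.
  - intros n. apply Rle_trans with (sumR n (fun i => ln (ps (0 + i)%nat) - ln (ps (0 + S i)%nat))).
    + apply sumR_le. intros; apply as_bounds.
    + rewrite (sumR_tele 0 n (fun i => ln (ps i))).
      assert (0 <= ln (ps (0 + n)%nat)).
      { rewrite <- ln_1. apply ln_le; [lra|apply ps_ge1]. }
      lra.
Qed.

Lemma dd_to0 : is_lim_seq dd 0.
Proof.
  apply is_lim_seq_ext with (fun N => sumR (S N) dd - sumR N dd).
  - intros N. rewrite sumR_S. ring.
  - replace 0 with (Dl - Dl) by ring. apply is_lim_seq_minus'; [|apply dd_lim].
    apply (is_lim_seq_incr_1 (fun N => sumR N dd) Dl). apply dd_lim.
Qed.

Lemma ps_to1 : is_lim_seq ps 1.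
Proof.
  apply is_lim_seq_le_le with (fun _ => 1) (fun j => 1 + dd j).
  - intros j. split; [apply ps_ge1|]. unfold dd.
    pose proof (ps_ge1 j).
    assert (/ ps j <= 1) by (rewrite <- Rinv_1; apply Rinv_le_contravar; lra). lra.
  - apply is_lim_seq_const.
  - replace (Finite 1) with (Finite (1 + 0)) by (f_equal; ring).
    apply is_lim_seq_plus'; [apply is_lim_seq_const|apply dd_to0].
Qed.
Definition bn (n j : nat) : R := P j (tau n) + / P j (tau n) - 2.
Definition an (n i : nat) : R := 1 - uu (tau n) (S i) * P (S i) (tau n).

Lemma bn_lim j : is_lim_seq (fun n => bn n j) (bs j).
Proof.
  unfold bn, bs. apply is_lim_seq_minus'; [|apply is_lim_seq_const].
  apply is_lim_seq_plus'; [apply Pn_lim|].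
  apply (is_lim_seq_inv _ (ps j)); [apply Pn_lim|].
  pose proof (ps_ge1 j). intro E; injection E; lra.
Qed.

Lemma an_lim i : is_lim_seq (fun n => an n i) (as_ i).
Proof.
  unfold an, as_. simpl uu. apply is_lim_seq_minus'; [apply is_lim_seq_const|].
  apply is_lim_seq_mult'; [|apply Pn_lim].
  apply (is_lim_seq_inv _ (ps i)); [apply Pn_lim|].
  pose proof (ps_ge1 i). intro E; injection E; lra.
Qed.

Lemma C_n_formula n : C_n n = sumR n (fun j => (1 - uu (tau n) j * P j (tau n)) - bn n j).
Proof.
  unfold C_n. rewrite A_n_eq. unfold Gval.
  destruct (tau_spec n) as [G _].
  rewrite Rmult_comm, <- sumR_const, <- sumR_minus. apply sumR_ext. intros i Hi.
  unfold bn. simpl uu at 2. ring.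
Qed.

Lemma C_n_split m : C_n (S m) =
  1 + sumR m (an (S m)) - sumR (S m) (bn (S m)).
Proof.
  rewrite C_n_formula, sumR_minus, sumR_shift. change (uu (tau (S m)) 0) with 0. unfold an; cbv beta. ring.
Qed.

Lemma bn_palin m : forall j, (j < S m)%nat -> bn (S m) j = bn (S m) (S m - 1 - j).
Proof.
  intros j Hj. destruct (tau_spec (S m)) as [G [Z _]].
  pose proof (sym_param m _ G Z j ltac:(lia)) as Sy.
  replace (S m - 1 - j)%nat with (m - j)%nat by lia.
  assert (0 < P j (tau (S m))) by (apply G; lia).
  assert (E : P (m - j) (tau (S m)) = / P j (tau (S m))).
  { apply Rmult_eq_reg_l with (P j (tau (S m))); [|lra]. rewrite Sy. field. lra. }
  unfold bn. rewrite E, Rinv_inv. ring.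
Qed.

Lemma an_palin m : forall i, (i < m)%nat -> an (S m) i = an (S m) (m - 1 - i).
Proof.
  intros i Hi. destruct (tau_spec (S m)) as [G [Z _]].
  set (a := tau (S m)) in *.
  assert (Inv : forall j, (j <= m)%nat -> P (m - j) a = / P j a).
  { intros j Hj. pose proof (sym_param m _ G Z j Hj) as Sy.
    assert (0 < P j a) by (apply G; lia).
    apply Rmult_eq_reg_l with (P j a); [|lra]. rewrite Sy. field. lra. }
  unfold an. simpl uu.
  replace (S (m - 1 - i)) with (m - i)%nat by lia.
  replace (m - 1 - i)%nat with (m - S i)%nat by lia.
  rewrite !Inv by lia. fold a.
  assert (0 < P i a) by (apply G; lia).
  assert (0 < P (S i) a) by (apply G; lia).
  field. split; lra.
Qed.

Lemma bn_tail n K M : (K <= M)%nat -> (M <= n - n / 2)%nat ->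
  Rabs (sumR M (bn n) - sumR K (bn n)) <= Bl - sumR K bs.
Proof.
  intros HK HM. destruct (tau_spec n) as [G [Z _]].
  replace M with (K + (M - K))%nat by lia. rewrite !sumR_split.
  replace (sumR K (bn n) + sumR (M - K) (fun i => bn n (K + i)%nat) - sumR K (bn n))
    with (sumR (M - K) (fun i => bn n (K + i)%nat)) by ring.
  assert (Hb : forall i, (i < M - K)%nat -> 0 <= bn n (K + i)%nat <= bs (K + i)%nat).
  { intros i Hi. set (j := (K + i)%nat).
    assert (Hj : (2 * j + 1 <= n)%nat).
    { unfold j. pose proof (Nat.div_mod_eq n 2). pose proof (Nat.mod_upper_bound n 2). lia. }
    assert (H1 : 1 <= P j (tau n)) by (apply first_half with n; auto).
    assert (H2 : P j (tau n) <= ps j) by (apply P_le_ps; lia).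
    unfold bn, bs. set (x := P j (tau n)) in *. set (y := ps j) in *.
    split.
    - assert (E : x + / x - 2 = (x - 1) ^ 2 / x) by (field; lra).
      rewrite E. apply Rmult_le_pos; [nra|left; apply Rinv_0_lt_compat; lra].
    - assert (E : y + / y - 2 - (x + / x - 2) = (y - x) * (1 - / (x * y))) by (field; lra).
      assert (/ (x * y) <= 1) by (rewrite <- Rinv_1; apply Rinv_le_contravar; nra).
      assert (0 <= (y - x) * (1 - / (x * y))) by (apply Rmult_le_pos; lra).
      lra. }
  assert (L1 : 0 <= sumR (M - K) (fun i => bn n (K + i)%nat)).
  { apply sumR_nonneg. intros; apply Hb; auto. }
  assert (L2 : sumR (M - K) (fun i => bn n (K + i)%nat) <= sumR (M - K) (fun i => bs (K + i)%nat)).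
  { apply sumR_le. intros; apply Hb; auto. }
  assert (L3 : sumR K bs + sumR (M - K) (fun i => bs (K + i)%nat) <= Bl).
  { rewrite <- sumR_split. apply (is_lim_seq_incr_compare (fun N => sumR N bs) Bl); [apply bs_lim|].
    apply partial_incr. intros; apply bs_bounds. }
  rewrite Rabs_pos_eq by auto. lra.
Qed.

Lemma an_tail n K M : (K <= M)%nat -> (M <= (n - 1) - (n - 1) / 2)%nat ->
  Rabs (sumR M (an n) - sumR K (an n)) <= 2 * ln (ps K).
Proof.
  intros HK HM. destruct (tau_spec n) as [G [Z _]].
  assert (lnK : 0 <= ln (ps K)) by (rewrite <- ln_1; apply ln_le; [lra|apply ps_ge1]).
  destruct (Nat.eq_dec K M) as [->|HKM].
  { replace (sumR M (an n) - sumR M (an n)) with 0 by ring. rewrite Rabs_R0. lra. }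
  set (a := tau n) in *.
  destruct n as [|m]; [simpl in HM; lia|].
  replace (S m - 1)%nat with m in HM by lia.
  assert (Hm2 : (m - M >= K)%nat /\ (M <= m)%nat).
  { pose proof (Nat.div_mod_eq m 2). pose proof (Nat.mod_upper_bound m 2). lia. }
  assert (Pos : forall i, (i <= m)%nat -> 0 < P i a) by (intros; apply G; lia).
  replace M with (K + (M - K))%nat by lia. rewrite !sumR_split.
  replace (sumR K (an (S m)) + sumR (M - K) (fun i => an (S m) (K + i)%nat) - sumR K (an (S m)))
    with (sumR (M - K) (fun i => an (S m) (K + i)%nat)) by ring.
  replace (K + (M - K))%nat with M in * by lia.
  assert (Ha : forall i, (i < M - K)%nat ->
     0 <= an (S m) (K + i)%nat <= ln (P (K + i)%nat a) - ln (P (K + S i)%nat a)).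
  { intros i Hi. set (j := (K + i)%nat). replace (K + S i)%nat with (S j) by (unfold j; lia).
    unfold an. fold a. simpl uu.
    assert (P0 : 0 < P j a) by (apply Pos; unfold j; lia).
    assert (P1 : 0 < P (S j) a) by (apply Pos; unfold j; lia).
    assert (Dc : P (S j) a < P j a) by (apply decr_param with (S m); auto; unfold j; lia).
    split.
    - assert (/ P j a * P (S j) a <= 1); [|lra].
      apply Rmult_le_reg_l with (P j a); [lra|].
      rewrite <- Rmult_assoc, Rinv_r, Rmult_1_l, Rmult_1_r by lra. lra.
    - pose proof (one_minus_le_ln (/ P j a * P (S j) a)
         ltac:(apply Rmult_lt_0_compat; [apply Rinv_0_lt_compat|]; lra)) as T.
      rewrite ln_mult, ln_Rinv in T by (try apply Rinv_0_lt_compat; lra). lra. }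
  assert (L1 : 0 <= sumR (M - K) (fun i => an (S m) (K + i)%nat)).
  { apply sumR_nonneg. intros; apply Ha; auto. }
  assert (L2 : sumR (M - K) (fun i => an (S m) (K + i)%nat) <= ln (P K a) - ln (P M a)).
  { eapply Rle_trans; [apply sumR_le; intros i Hi; apply Ha; auto|].
    rewrite (sumR_tele K (M - K) (fun i => ln (P i a))).
    replace (K + (M - K))%nat with M by lia. lra. }
  assert (PK : P K a <= ps K) by (apply P_le_ps; lia).
  assert (lnPK : ln (P K a) <= ln (ps K)) by (apply ln_le; auto; apply Pos; lia).
  pose proof (sym_param m a G Z M ltac:(lia)) as Sy.
  assert (PM : P M a = / P (m - M) a).
  { assert (0 < P (m - M) a) by (apply Pos; lia).
    apply Rmult_eq_reg_r with (P (m - M) a); [|lra]. rewrite Sy. field. lra. }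
  assert (Dm : P (m - M) a <= P K a).
  { replace (m - M)%nat with (K + (m - M - K))%nat by lia.
    apply decr_le with (S m); auto. lia. }
  assert (lnM : - ln (P M a) <= ln (P K a)).
  { rewrite PM, ln_Rinv by (apply Pos; lia). rewrite Ropp_involutive.
    apply ln_le; auto. apply Pos; lia. }
  rewrite Rabs_pos_eq by auto. lra.
Qed.
Lemma eb_lim : is_lim_seq (fun K => Bl - sumR K bs) 0.
Proof.
  replace 0 with (Bl - Bl) by ring.
  apply is_lim_seq_minus'; [apply is_lim_seq_const|apply bs_lim].
Qed.

Lemma ea_lim : is_lim_seq (fun K => 2 * ln (ps K)) 0.
Proof.
  replace 0 with (2 * ln 1) by (rewrite ln_1; ring).
  apply (is_lim_seq_scal_l _ 2 (ln 1)).
  apply (is_lim_seq_continuous ln ps 1); [|apply ps_to1].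
  apply continuity_pt_filterlim. apply continuous_ln. lra.
Qed.

Lemma C_lim : is_lim_seq C_n (1 + (Al + Al) - (Bl + Bl)).
Proof.
  apply is_lim_seq_ext_loc with
    (fun n => 1 + (sumR ((n - 1) / 2) (an n) + sumR ((n - 1) - (n - 1) / 2) (an n))
                - (sumR (n / 2) (bn n) + sumR (n - n / 2) (bn n))).
  { exists 1%nat. intros n Hn. destruct n as [|m]; [lia|].
    rewrite C_n_split. replace (S m - 1)%nat with m by lia.
    rewrite (sumR_palin m (an (S m)) (an_palin m)).
    rewrite (sumR_palin (S m) (bn (S m)) (bn_palin m)).
    reflexivity. }
  apply is_lim_seq_minus'; [apply is_lim_seq_plus'; [apply is_lim_seq_const|]|];
    apply is_lim_seq_plus'.
  - apply (sandwich _ as_ _ _ (fun K => 2 * ln (ps K))).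
    + apply an_lim.
    + apply as_lim.
    + apply ea_lim.
    + intros K. exists (2 * K + 2)%nat. intros n Hn.
      pose proof (Nat.div_mod_eq (n - 1) 2). pose proof (Nat.mod_upper_bound (n - 1) 2). lia.
    + intros n K HK. apply an_tail; auto.
      pose proof (Nat.div_mod_eq (n - 1) 2). pose proof (Nat.mod_upper_bound (n - 1) 2). lia.
  - apply (sandwich _ as_ _ _ (fun K => 2 * ln (ps K))).
    + apply an_lim.
    + apply as_lim.
    + apply ea_lim.
    + intros K. exists (2 * K + 2)%nat. intros n Hn.
      pose proof (Nat.div_mod_eq (n - 1) 2). pose proof (Nat.mod_upper_bound (n - 1) 2). lia.
    + intros n K HK. apply an_tail; auto.
  - apply (sandwich _ bs _ _ (fun K => Bl - sumR K bs)).
    + apply bn_lim.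
    + apply bs_lim.
    + apply eb_lim.
    + intros K. exists (2 * K + 2)%nat. intros n Hn.
      pose proof (Nat.div_mod_eq n 2). pose proof (Nat.mod_upper_bound n 2). lia.
    + intros n K HK. apply bn_tail; auto.
      pose proof (Nat.div_mod_eq n 2). pose proof (Nat.mod_upper_bound n 2). lia.
  - apply (sandwich _ bs _ _ (fun K => Bl - sumR K bs)).
    + apply bn_lim.
    + apply bs_lim.
    + apply eb_lim.
    + intros K. exists (2 * K + 2)%nat. intros n Hn.
      pose proof (Nat.div_mod_eq n 2). pose proof (Nat.mod_upper_bound n 2). lia.
    + intros n K HK. apply bn_tail; auto.
Qed.

Lemma S_lim : is_lim_seq
  (fun N => sumR (S N) (fun j => 3 - 2 * ps j - ps j * uu ts j)) (Al - Bl).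
Proof.
  apply is_lim_seq_ext with (fun N => (1 + sumR N as_) - sumR (S N) bs - rs (S N)).
  { intros N. rewrite rs_tele.
    rewrite (sumR_ext (S N) (fun j => 3 - 2 * ps j - ps j * uu ts j)
               (fun j => ((1 - uu ts j * ps j) - bs j) - dd j)).
    2:{ intros i _. unfold bs, dd. ring. }
    rewrite (sumR_minus (S N) (fun j => (1 - uu ts j * ps j) - bs j) dd).
    rewrite (sumR_minus (S N) (fun j => 1 - uu ts j * ps j) bs).
    rewrite (sumR_shift N (fun j => 1 - uu ts j * ps j)).
    change (uu ts 0) with 0. unfold as_, dd. ring. }
  replace (Al - Bl) with ((1 + Al) - Bl - 1) by ring.
  apply is_lim_seq_minus'; [apply is_lim_seq_minus'|].
  - apply is_lim_seq_plus'; [apply is_lim_seq_const|apply as_lim].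
  - apply (is_lim_seq_incr_1 (fun N => sumR N bs) Bl). apply bs_lim.
  - unfold rs. simpl uu.
    replace 1 with (/ 1 * 1) by field.
    apply is_lim_seq_mult'.
    + apply (is_lim_seq_inv ps 1); [apply ps_to1|]. intro E; injection E; lra.
    + apply (is_lim_seq_incr_1 ps 1). apply ps_to1.
Qed.

Theorem theorem1 :
  exists pstar : nat -> R,
    (forall j : nat, is_lim_seq (fun n : nat => p_jn j n) (pstar j)) /\
    let ustar := fun j : nat => match j with O => 0 | S k => / pstar k end in
    let S_N := fun N : nat => sumR (S N) (fun j => 3 - 2 * pstar j - pstar j * ustar j) in
    exists S C : R,
      is_lim_seq S_N S /\ is_lim_seq (fun n : nat => C_n n) C /\ C = 2 * S + 1.
Proof.
  exists ps. split.
  - intros j. apply is_lim_seq_ext_loc with (fun n => P j (tau n)); [|apply Pn_lim].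
    exists j. intros n Hn. destruct (tau_spec n) as [_ [_ [H _]]]. rewrite H by lia. reflexivity.
  - intros ustar S_N. exists (Al - Bl), (1 + (Al + Al) - (Bl + Bl)).
    split; [|split].
    + apply S_lim.
    + apply C_lim.
    + ring.
Qed.
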